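(* Suppose $G$ is a topological graph whose edge relation is transitive and such that, for the quotient map $\pi\colon V(G)\to |G|$, we have $\operatorname{card}(\pi^{-1}(x))\le 2$ for every $x\in|G|$. Then $\dim|G|\le 1$.
   Context: A topological graph is a pair $G=(V(G),E(G))$ where $V(G)$ is a compact, second countable, zero-dimensional space and $E(G)\subseteq V(G)^2$ is a closed, reflexive and symmetric relation. If $E(G)$ is also transitive (so an equivalence relation), the topological realization $|G|$ is the quotient space $V(G)/E(G)$, and $\pi$ denotes the quotient map. $\dim$ is covering dimension. *)

(* Defs.v *)
From HB Require Import structures.
From mathcomp Require Import all_boot all_order all_algebra.
From mathcomp Require Import all_classical cardinality topology generic_quotient.
Set Implicit Arguments. Unset Strict Implicit. Unset Printing Implicit Defensive.
Local Open Scope classical_set_scope.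
Local Open Scope card_scope.

Definition covering_dim_le (X : topologicalType) (n : nat) : Prop :=
  forall (k : nat) (U : 'I_k -> set X),
    (forall i, open (U i)) -> \bigcup_i U i = [set: X] ->
    exists (m : nat) (W : 'I_m -> set X),
      [/\ forall j, open (W j),
          \bigcup_j W j = [set: X],
          forall j, exists i, W j `<=` U i &
          forall x : X, [set j | W j x] #<= `I_n.+1].

(* Main.v *)
Require Import Defs.
From HB Require Import structures.
From mathcomp Require Import all_boot all_order all_algebra.
From mathcomp Require Import all_classical cardinality topology generic_quotient.
From mathcomp Require Import finmap.
Set Implicit Arguments. Unset Strict Implicit.
Local Open Scope classical_set_scope.
Local Open Scope card_scope.
Local Open Scope quotient_scope.
Definition pV {T : topologicalType} (x0 : T) : Type := T.
HB.instance Definition _ (T : topologicalType) (x0 : T) := Topological.copy (pV x0) T.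
HB.instance Definition _ (T : topologicalType) (x0 : T) := isPointed.Build (pV x0) x0.

Lemma cover_compactT (T : topologicalType) (A : set T) : compact A -> cover_compact A.
Proof.
move=> cA I D f fo Af.
have [[x0 Ax0]|A0] := pselect (exists x, A x).
  have cA' : @compact (pV x0) A by [].
  rewrite compact_cover in cA'. exact: (cA' I D f fo Af).
exists finmap.fset0.
  by move=> i; rewrite finmap.inE.
by move=> x Ax; exfalso; apply: A0; exists x.
Qed.

Lemma clopen_bigcup_fin (T : topologicalType) (I : choiceType) (A : set I)
  (F : I -> set T) : finite_set A -> (forall i, A i -> clopen (F i)) ->
  clopen (\bigcup_(i in A) F i).
Proof.
move=> fA cF; split; first by apply: bigcup_open => i /cF [].
by apply: closed_bigcup => // i /cF [].
Qed.


Definition disj (T : Type) (k : nat) (D : 'I_k -> set T) (i : 'I_k) :=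
  D i `&` ~` \bigcup_(j in [set j : 'I_k | (j < i)%N]) D j.

Lemma disj_sub T k (D : 'I_k -> set T) i : disj D i `<=` D i.
Proof. by move=> v []. Qed.

Lemma disj_clopen (T : topologicalType) k (D : 'I_k -> set T) i :
  (forall i, clopen (D i)) -> clopen (disj D i).
Proof.
move=> cD; apply: clopenI; first exact: cD.
apply: (@clopenC _ _ set0).
apply: clopen_bigcup_fin; first exact: finite_finset.
by move=> j _; exact: cD.
Qed.

Lemma disj_uniq T k (D : 'I_k -> set T) i j v :
  disj D i v -> disj D j v -> i = j.
Proof.
move=> [Di nDi] [Dj nDj].
have [ij|ji|ij] := ltngtP i j.
- by exfalso; apply: nDj; exists i.
- by exfalso; apply: nDi; exists j.
- exact: val_inj.
Qed.

Lemma disj_cover T k (D : 'I_k -> set T) i v : D i v -> exists j, disj D j v.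
Proof.
suff : forall n (i : 'I_k), (i <= n)%N -> D i v -> exists j, disj D j v.
  by move=> /(_ i i (leqnn _)); apply.
elim=> [|n IH] {}i.
  rewrite leqn0 => /eqP i0 Di; exists i; split => // -[j /= ji _].
  by rewrite i0 in ji.
move=> ilen Di.
have [[j [ji Dj]]|nj] := pselect (exists j : 'I_k, (j < i)%N /\ D j v).
  by apply: (IH j) => //; rewrite -ltnS; exact: leq_trans ji ilen.
exists i; split => // -[j /= ji Dj]; apply: nj; by exists j.
Qed.

Section S.
Variable V : topologicalType.
Variable e : equiv_rel V.
Hypothesis cV : compact [set: V].
Hypothesis zV : zero_dimensional V.
Hypothesis cE : closed [set p : V * V | e p.1 p.2].

Lemma hausV : hausdorff_space V.
Proof.
rewrite open_hausdorff => x y /zV [U [[oU cU] Ux nUy]].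
exists (U, ~` U); first by split; rewrite !in_setE.
split => //=; first exact: closed_openC.
by apply/eqP; rewrite setICr.
Qed.

Definition sat (A : set V) := [set v | exists2 w, A w & e v w].
Definition satint (A : set V) := [set v | forall w, e v w -> A w].

Lemma sat_closed A : closed A -> closed (sat A).
Proof.
move=> cA.
have -> : sat A = fst @` ([set p : V * V | e p.1 p.2] `&` ([set: V] `*` A)).
  apply/seteqP; split.
    by move=> v [w Aw evw]; exists (v, w).
  by move=> v [[a b] [/= eab [_ Ab]] <-]; exists b.
apply: compact_closed; first exact: hausV.
apply: continuous_compact; first by apply: continuous_subspaceT => x; exact: cvg_fst.
rewrite setIC; apply: compact_closedI => //.
apply: compact_setX => //.
exact: (subclosed_compact cA cV).
Qed.

Lemma satintE A : satint A = ~` sat (~` A).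
Proof.
apply/seteqP; split.
  by move=> v h [w nAw evw]; apply: nAw; apply: h.
move=> v h w evw; apply: contrapT => nAw; apply: h; by exists w.
Qed.

Lemma satint_open A : open A -> open (satint A).
Proof.
move=> oA; rewrite satintE; apply: closed_openC; apply: sat_closed.
exact: open_closedC.
Qed.

Lemma satint_sub A : satint A `<=` A.
Proof. by move=> v h; apply: h. Qed.

Lemma satint_sat A v w : satint A v -> e v w -> satint A w.
Proof.
move=> h evw u ewu; apply: h; exact: equiv_trans evw ewu.
Qed.

Lemma sat_sat A v w : sat A v -> e v w -> sat A w.
Proof.
move=> [u Au evu] evw; exists u => //.
by apply: equiv_trans evu; rewrite equiv_sym.
Qed.

Lemma fin_subcover (K : set V) (f : V -> set V) : closed K ->
  (forall x, K x -> open (f x) /\ f x x) ->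
  exists D : {fset V}, (forall x, x \in D -> K x) /\ K `<=` \bigcup_(x in [set` D]) f x.
Proof.
move=> cK hf.
have cpK : compact K by exact: (subclosed_compact cK cV).
have [D DK KD] := @cover_compactT V K cpK V K f
  (fun i Ki => proj1 (hf i Ki))
  (fun x Kx => ex_intro2 _ _ x Kx (proj2 (hf x Kx))).
exists D; split => //.
by move=> x /DK; rewrite in_setE.
Qed.

Lemma clopen_subcover (K : set V) (f : V -> set V) : closed K ->
  (forall x, K x -> clopen (f x) /\ f x x) ->
  exists C, [/\ clopen C, K `<=` C & C `<=` \bigcup_(x in K) f x].
Proof.
move=> cK hf.
have [D [DK KD]] := @fin_subcover K f cK
  (fun x Kx => conj (proj1 (proj1 (hf x Kx))) (proj2 (hf x Kx))).
exists (\bigcup_(x in [set` D]) f x); split => //.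
- apply: clopen_bigcup_fin; first exact: finite_fset.
  by move=> i /DK Ki; case: (hf i Ki).
- by move=> v [x /DK Kx fxv]; exists x.
Qed.

Lemma sep_pt (a : V) (B : set V) : closed B -> ~ B a ->
  exists C, [/\ clopen C, C a & forall b, B b -> ~ C b].
Proof.
move=> cB nBa.
have hU : forall b, exists U : set V, B b -> [/\ clopen U, U b & ~ U a].
  move=> b; have [Bb|nBb] := pselect (B b); last by exists set0.
  have : b != a by apply/eqP => ba; apply: nBa; rewrite -ba.
  by move=> /zV [U [cU Ub nUa]]; exists U.
have [f hf] := choice hU.
have [C [cC BC Cf]] := @clopen_subcover _ f cB (fun x Bx => let: And3 c fx _ := hf x Bx in conj c fx).
exists (~` C); split.
- exact: clopenC.
- by move=> /Cf [x Bx fxa]; have [_ _ ] := hf x Bx; apply.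
- by move=> b Bb; apply; apply: BC.
Qed.

Lemma sep (A B : set V) : closed A -> closed B -> (forall x, A x -> ~ B x) ->
  exists C, [/\ clopen C, A `<=` C & forall b, B b -> ~ C b].
Proof.
move=> cA cB AB.
have hU : forall a, exists U : set V, A a -> [/\ clopen U, U a & forall b, B b -> ~ U b].
  move=> a; have [Aa|nAa] := pselect (A a); last by exists set0.
  have [U hU] := @sep_pt a B cB (AB a Aa); by exists U.
have [f hf] := choice hU.
have [C [cC AC Cf]] := @clopen_subcover _ f cA (fun x Ax => let: And3 c fx _ := hf x Ax in conj c fx).
exists C; split => // b Bb /Cf [x Ax fxb].
by have [_ _ ] := hf x Ax; move=> /(_ b Bb).
Qed.


Local Notation Q := (quotient_topology {eq_quot e}).
Hypothesis hfib : forall x : Q, (\pi_Q @^-1` [set x]) #<= `I_2.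

Lemma piE (a b : V) : (\pi_Q a = \pi_Q b) <-> e a b.
Proof.
split; first by move=> h; apply/(@eqquotP _ _ {eq_quot e}); exact: h.
by move=> h; exact/(@eqquotP _ _ {eq_quot e}).
Qed.

Lemma three (v a b c : V) : e v a -> e v b -> e v c ->
  a = b \/ a = c \/ b = c.
Proof.
move=> eva evb evc.
have /pcard_leP/injfunPex [f ff fi] := hfib (\pi_Q v).
have inA : forall w, e v w -> (\pi_Q @^-1` [set \pi_Q v]) w.
  by move=> w evw; rewrite /= ; apply/piE; rewrite equiv_sym.
have fa := ff a (inA a eva); have fb := ff b (inA b evb); have fc := ff c (inA c evc).
move: fa fb fc; rewrite /= => fa fb fc.
have [fab|fab] := eqVneq (f a) (f b); first by left; apply: fi; rewrite ?in_setE //; apply: inA.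
have [fac|fac] := eqVneq (f a) (f c); first by right; left; apply: fi; rewrite ?in_setE //; apply: inA.
have [fbc|fbc] := eqVneq (f b) (f c); first by right; right; apply: fi; rewrite ?in_setE //; apply: inA.
exfalso; move: fab fac fbc fa fb fc.
by case: (f a) => [|[|?]]; case: (f b) => [|[|?]]; case: (f c) => [|[|?]].
Qed.

Lemma main_sec : covering_dim_le Q 1.
Proof.
move=> k U oU covU.
pose P i := \pi_Q @^-1` U i.
have oP : forall i, open (P i) by move=> i; exact: oU.
have Psat : forall i v w, P i v -> e v w -> P i w.
  by move=> i v w; rewrite /P /= => h /piE <-.
have hN : forall v, exists p : 'I_k * set V,
    [/\ P p.1 v, clopen p.2, p.2 v & p.2 `<=` P p.1].
  move=> v; have : [set: Q] (\pi_Q v) by [].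
  rewrite -covU => -[i _ Uiv].
  have [C [cC Cv CnP]] := @sep_pt v (~` P i) (open_closedC (oP i)) (fun h => h Uiv).
  exists (i, C); split => // w Cw; apply: contrapT => /CnP; exact.
have [g hg] := choice hN.
have [Dv [_ Dcov]] := @fin_subcover setT (fun v => (g v).2) closedT
  (fun x _ => let: And4 _ c gx _ := hg x in conj (proj1 c) gx).
pose D i := \bigcup_(x in [set x | x \in Dv /\ (g x).1 = i]) (g x).2.
have cD : forall i, clopen (D i).
  move=> i; apply: clopen_bigcup_fin.
    by apply: (@sub_finite_set _ _ [set` Dv]); [move=> x [] | exact: finite_fset].
  by move=> x _; have [] := hg x.
have DP : forall i, D i `<=` P i.
  by move=> i v [x [_ <-] gxv]; have [_ _ _] := hg x; apply.
have Dc : forall v, exists i, D i v.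
  move=> v; have [x Dx gxv] := Dcov v I.
  by exists (g x).1; exists x.
pose C := disj D.
have cC : forall i, clopen (C i) by move=> i; exact: disj_clopen.
have CP : forall i, C i `<=` P i by move=> i v h; apply: DP; exact: disj_sub h.
have Cc : forall v, exists i, C i v.
  by move=> v; have [i Div] := Dc v; exact: (disj_cover Div).
pose H i := sat (C i) `&` sat (\bigcup_(l in [set l : 'I_k | (i < l)%N]) C l).
have cH : forall i, closed (H i).
  move=> i; apply: closedI; apply: sat_closed; first by case: (cC i).
  apply: closed_bigcup; first exact: finite_finset.
  by move=> l _; case: (cC l).
have Hdisj : forall i j v, H i v -> H j v -> i = j.
  suff : forall (i j : 'I_k) v, (i < j)%N -> H i v -> H j v -> False.
    move=> h i j v Hi Hj; have [ij|ji|ij] := ltngtP i j.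
    - by exfalso; exact: h Hi Hj.
    - by exfalso; exact: h Hj Hi.
    - exact: val_inj.
  move=> i j v ij [[w1 C1 e1] _] [[w3 C3 e3] [w4 [l /= jl C4] e4]].
  have := three e1 e3 e4; case=> [E|[E|E]]; subst.
  - by move: ij; rewrite (disj_uniq C1 C3) ltnn.
  - by move: (ltn_trans ij jl); rewrite (disj_uniq C1 C4) ltnn.
  - by move: jl; rewrite (disj_uniq C3 C4) ltnn.
have HP : forall i, H i `<=` P i.
  move=> i v [[w Cw evw] _]; apply: (Psat _ w); first exact: CP.
  by rewrite equiv_sym.
have Hsat : forall i v w, H i v -> e v w -> H i w.
  by move=> i v w [h1 h2] evw; split; [exact: sat_sat h1 evw|exact: sat_sat h2 evw].
have hG : forall i, exists G, [/\ clopen G, H i `<=` G &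
    forall b, (\bigcup_(j in [set j | j != i]) H j) b -> ~ G b].
  move=> i; apply: sep; first exact: cH.
    by apply: closed_bigcup; [exact: finite_finset | move=> j _; exact: cH].
  move=> x Hx [j /= ji Hj]; move: ji; by rewrite (Hdisj _ _ _ Hj Hx) eqxx.
have [G hG'] := choice hG.
pose G' := disj G.
have HG' : forall i, H i `<=` G' i.
  move=> i v Hv; have [_ HG GH] := hG' i; split; first exact: HG.
  move=> [j /= ji Gj]; have [_ _ GHj] := hG' j; apply: (GHj v) => //.
  exists i => //=; by apply/negP => /eqP ij; move: ji; rewrite ij ltnn.
pose S (s : 'I_k + 'I_k) := match s with
  | inl i => satint (C i) | inr i => satint (G' i `&` P i) end.
have Ssat : forall s v w, S s v -> e v w -> S s w.
  by move=> [i|i] v w h evw; exact: satint_sat h evw.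
have Sopen : forall s, open (S s).
  move=> [i|i]; apply: satint_open; first by case: (cC i).
  apply: openI => //; apply: (proj1 (disj_clopen i _)).
  by move=> j; case: (hG' j).
have erepr : forall v, e (repr (\pi_Q v)) v by move=> v; apply/piE; rewrite reprK.
pose W (j : 'I_(k + k)) := [set y : Q | S (fintype.split j) (repr y)].
exists (k + k), W; split.
- move=> j.
  have E : \pi_Q @^-1` W j = S (fintype.split j).
    apply/seteqP; split => v /=.
      by move=> h; apply: Ssat h (erepr v).
    by move=> h; apply: Ssat h _; rewrite equiv_sym; exact: erepr.
  change (open (\pi_Q @^-1` W j)); rewrite E; exact: Sopen.
- apply/seteqP; split => // y _.
  set v := repr y.
  have [a Cav] := Cc v.
  have [allin|notall] := pselect (forall w, e v w -> C a w).
    exists (unsplit (inl a)) => //.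
    by change (S (fintype.split (unsplit (inl a : 'I_k + 'I_k))) (repr y)); rewrite unsplitK.
  have [w /not_implyP [evw nCaw]] := (proj2 (existsNP _)) notall.
  have [b Cbw] := Cc w.
  have ab : a != b by apply/eqP => ab; apply: nCaw; rewrite ab.
  have key : forall i l : 'I_k, (i < l)%N -> sat (C i) v -> sat (C l) v -> H i v.
    move=> i l il [w1 C1 e1] [w2 C2 e2]; split; first by exists w1.
    by exists w2 => //; exists l.
  have sa : sat (C a) v by exists v.
  have sb : sat (C b) v by exists w.
  have [i Hi] : exists i, H i v.
    have [ablt|balt|abeq] := ltngtP a b.
    - by exists a; exact: key ablt sa sb.
    - by exists b; exact: key balt sb sa.
    - by move: ab; rewrite (val_inj abeq) eqxx.
  exists (unsplit (inr i)) => //.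
  change (S (fintype.split (unsplit (inr i : 'I_k + 'I_k))) (repr y)); rewrite unsplitK /=.
  move=> u evu; have Hu := Hsat _ _ _ Hi evu; split; first exact: HG'.
  exact: HP.
- move=> j; case E: (fintype.split j) => [i|i]; exists i => y; rewrite /W /= E.
    move=> /satint_sub /CP; rewrite /P /= reprK; exact.
  by move=> /satint_sub [_]; rewrite /P /= reprK.
- move=> y; apply/pcard_leP/injfunPex.
  exists (fun j : 'I_(k + k) => if fintype.split j is inl _ then 0%N else 1%N).
    by move=> j _; rewrite /=; case: (fintype.split j).
  move=> j1 j2; rewrite !in_setE /W /= => h1 h2 hf.
  apply: (can_inj splitK).
  move: h1 h2 hf; case: (fintype.split j1) => i1; case: (fintype.split j2) => i2 //= h1 h2 _.
    by rewrite (disj_uniq (satint_sub h1) (satint_sub h2)).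
  by rewrite (disj_uniq (proj1 (satint_sub h1)) (proj1 (satint_sub h2))).
Qed.

End S.

Theorem mainTheorem4 (V : topologicalType) (e : equiv_rel V) :
  compact [set: V] -> @second_countable V -> zero_dimensional V ->
  closed [set p : V * V | e p.1 p.2] ->
  (forall x : quotient_topology {eq_quot e},
      (\pi_(quotient_topology {eq_quot e}) @^-1` [set x]) #<= `I_2) ->
  covering_dim_le (quotient_topology {eq_quot e}) 1.
Proof.
move=> cV _ zV cE hf; exact: (main_sec cV zV cE hf).
Qed.
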